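(* Let $\sigma(x,y)=(x\rightharpoonup y,x\leftharpoonup y)$ be an involutive non-degenerate quiver-theoretic Yang--Baxter map on a quiver $\mathscr{A}$ over $\Lambda$, let $x\star y:=(x\rightharpoonup\cdot)^{-1}(y)$ for $\mathfrak{s}(x)=\mathfrak{s}(y)$, and let $E$ be the closure of (the image of) $\mathscr{A}$ under right-lcms in the structure category $\mathscr{C}(\sigma)$. For $\lambda\in\Lambda$ and a finite set $I=\{x_1,\dots,x_n\}\subseteq\mathscr{A}(\lambda,\Lambda)$ of pairwise distinct arrows, define $\Omega_1(x_1)=x_1$, $\Omega_i(x_1,\dots,x_i)=\Omega_{i-1}(x_1,\dots,x_{i-1})\star\Omega_{i-1}(x_1,\dots,x_{i-2},x_i)$ for $2\le i\le n$, and $\Delta_I=[\Omega_1(x_1)|\Omega_2(x_1,x_2)|\dots|\Omega_n(x_1,\dots,x_n)]\in\mathscr{C}(\sigma)$ (this element is the right-lcm of $I$ and does not depend on the ordering of $I$). Then $E=\{\Delta_I\mid\lambda\in\Lambda,\ I\subseteq\mathscr{A}(\lambda,\Lambda),\ 1\le|I|<\infty\}\cup\mathbf{1}_{\mathscr{A}}$, where $\mathbf{1}_{\mathscr{A}}=\{\mathbf{1}_\lambda\mid\lambda\in\Lambda\}$ is the set of identities of $\mathscr{C}(\sigma)$.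
   Context: A quiver-theoretic Yang--Baxter map is a source/target-preserving map $\sigma$ on composable pairs satisfying the braid relation; involutive: $\sigma^2=\mathrm{id}$; non-degenerate: all $x\rightharpoonup\cdot\colon\mathscr{A}(\mathfrak{t}(x),\Lambda)\to\mathscr{A}(\mathfrak{s}(x),\Lambda)$ and $\cdot\leftharpoonup y\colon\mathscr{A}(\Lambda,\mathfrak{s}(y))\to\mathscr{A}(\Lambda,\mathfrak{t}(y))$ bijective. $\mathscr{C}(\sigma)$ is the category presented by generators $\mathscr{A}$ and relations $x|y\sim(x\rightharpoonup y)|(x\leftharpoonup y)$; $[w]$ denotes the class of a path $w$. A right-lcm of elements is a common right-multiple that left-divides every common right-multiple. *)

(* Defs.v *)
From Stdlib Require Import List Relations ClassicalEpsilon.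
Import ListNotations.
Set Implicit Arguments.

(* A quiver over the vertex set L: arrows A with source s and target t.
   sigma(x,y) = (l x y, r x y) = (x -> y, x <- y); l and r are total functions
   but only their values on composable pairs (t x = s y) are ever used. *)

Definition s12 {A : Type} (l r : A -> A -> A) (p : A * A * A) : A * A * A :=
  let '(a, b, c) := p in (l a b, r a b, c).
Definition s23 {A : Type} (l r : A -> A -> A) (p : A * A * A) : A * A * A :=
  let '(a, b, c) := p in (a, l b c, r b c).

Record qYB (L A : Type) (s t : A -> L) (l r : A -> A -> A) : Prop := {
  qyb_src : forall x y, t x = s y -> s (l x y) = s x;
  qyb_mid : forall x y, t x = s y -> t (l x y) = s (r x y);
  qyb_tgt : forall x y, t x = s y -> t (r x y) = t y;
  qyb_braid : forall x y z, t x = s y -> t y = s z ->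
    s12 l r (s23 l r (s12 l r (x, y, z))) = s23 l r (s12 l r (s23 l r (x, y, z)))
}.

Definition involutive (L A : Type) (s t : A -> L) (l r : A -> A -> A) : Prop :=
  forall x y, t x = s y -> l (l x y) (r x y) = x /\ r (l x y) (r x y) = y.

Definition nondegenerate (L A : Type) (s t : A -> L) (l r : A -> A -> A) : Prop :=
  (forall x z, s z = s x -> exists! y, s y = t x /\ l x y = z) /\
  (forall y z, t z = t y -> exists! x, t x = s y /\ r x y = z).

Definition star (L A : Type) (s t : A -> L) (l : A -> A -> A) (x y : A) : A :=
  epsilon (inhabits x) (fun z => s z = t x /\ l x z = y).

(* Om (rev [x1;...;x_{i-1}]) x_i = Omega_i(x1,...,x_i) *)
Fixpoint Om (L A : Type) (s t : A -> L) (l : A -> A -> A) (rp : list A) (x : A) : A :=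
  match rp with
  | [] => x
  | y :: rq => star s t l (Om s t l rq y) (Om s t l rq x)
  end.

Fixpoint deltas (L A : Type) (s t : A -> L) (l : A -> A -> A) (acc rest : list A)
  : list A :=
  match rest with
  | [] => []
  | x :: rest' => Om s t l (rev acc) x :: deltas s t l (acc ++ [x]) rest'
  end.

Definition Delta (L A : Type) (s t : A -> L) (l : A -> A -> A) (I : list A) : list A :=
  deltas s t l [] I.

(* Paths in the quiver starting at a vertex lam; the empty path at lam is 1_lam. *)
Fixpoint is_path (L A : Type) (s t : A -> L) (lam : L) (w : list A) : Prop :=
  match w with
  | [] => True
  | x :: w' => s x = lam /\ is_path s t (t x) w'
  end.

Fixpoint tgt (L A : Type) (s t : A -> L) (lam : L) (w : list A) : L :=
  match w with
  | [] => lam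
  | x :: w' => tgt s t (t x) w'
  end.

Inductive step (L A : Type) (s t : A -> L) (l r : A -> A -> A) : list A -> list A -> Prop :=
| step_intro : forall p q x y, t x = s y ->
    step s t l r (p ++ x :: y :: q) (p ++ l x y :: r x y :: q).

(* the congruence defining C(sigma): [u] = [v] iff cequiv u v (same source) *)
Definition cequiv (L A : Type) (s t : A -> L) (l r : A -> A -> A) : relation (list A) :=
  clos_refl_sym_trans (list A) (step s t l r).

Definition ldiv (L A : Type) (s t : A -> L) (l r : A -> A -> A) (lam : L) (u v : list A)
  : Prop :=
  is_path s t lam u /\ is_path s t lam v /\
  exists z, is_path s t (tgt s t lam u) z /\ cequiv s t l r (u ++ z) v.

Definition is_right_lcm (L A : Type) (s t : A -> L) (l r : A -> A -> A) (lam : L)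
  (F : list (list A)) (m : list A) : Prop :=
  is_path s t lam m /\
  (forall f, In f F -> ldiv s t l r lam f m) /\
  (forall m', is_path s t lam m' -> (forall f, In f F -> ldiv s t l r lam f m') ->
     ldiv s t l r lam m m').

(* E: the closure of (the image of) A under right-lcms in C(sigma):
   the smallest set of elements (closed under ~) containing every [x], x in A,
   and containing a right-lcm of every finite family of its elements
   (with a common source) which admits one. *)
Inductive InE (L A : Type) (s t : A -> L) (l r : A -> A -> A) : L -> list A -> Prop :=
| InE_gen : forall x, InE s t l r (s x) [x]
| InE_lcm : forall lam F m, (forall f, In f F -> InE s t l r lam f) ->
    is_right_lcm s t l r lam F m -> InE s t l r lam m
| InE_equiv : forall lam u v, InE s t l r lam u -> cequiv s t l r u v ->
    InE s t l r lam v.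

(* Main.v *)
Require Import Defs.
From Stdlib Require Import List Relations Permutation Classical ClassicalEpsilon Lia.
Import ListNotations.

Fixpoint pi {A : Type} (l : A -> A -> A) (w : list A) : list A :=
  match w with [] => [] | x :: w' => x :: map (l x) (pi l w') end.

Definition Lam {A : Type} (l : A -> A -> A) (w : list A) (e : A) : A :=
  fold_right l e w.

Lemma pi_length {A} (l : A -> A -> A) w : length (pi l w) = length w.
Proof. induction w; simpl; rewrite ?length_map; auto. Qed.

Lemma pi_app {A} (l : A -> A -> A) u z :
  pi l (u ++ z) = pi l u ++ map (Lam l u) (pi l z).
Proof.
  induction u as [|x u IH]; simpl.
  - rewrite map_id. reflexivity.
  - rewrite IH, map_app, map_map. reflexivity.
Qed.

Lemma pi_src {L A} {s t : A -> L} {l r : A -> A -> A} (Hyb : qYB s t l r) :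
  forall w lam, is_path s t lam w -> forall e, In e (pi l w) -> s e = lam.
Proof.
  induction w as [|x w IH]; simpl; intros lam Hp e He; [contradiction|].
  destruct Hp as [Hx Hp]. destruct He as [<-|He]; auto.
  apply in_map_iff in He as [e' [<- He']].
  rewrite (qyb_src Hyb); auto. symmetry; eapply IH; eauto.
Qed.

Lemma braid1 {L A} {s t : A -> L} {l r : A -> A -> A} (Hyb : qYB s t l r) x y z :
  t x = s y -> t y = s z -> l x (l y z) = l (l x y) (l (r x y) z).
Proof.
  intros H1 H2. pose proof (qyb_braid Hyb x y z H1 H2) as H. simpl in H.
  injection H; intros; congruence.
Qed.

Lemma star_l {L A} {s t : A -> L} {l r : A -> A -> A} (Hyb : qYB s t l r)
  (Hnd : nondegenerate s t l r) x e : s e = t x -> star s t l x (l x e) = e.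
Proof.
  intros He. unfold star.
  destruct (epsilon_spec (inhabits x) (fun z => s z = t x /\ l x z = l x e)) as [H1 H2].
  { exists e; auto. }
  destruct (proj1 Hnd x (l x e)) as [y [_ Hu]].
  { apply (qyb_src Hyb); auto. }
  transitivity y; [symmetry|]; apply Hu; auto.
Qed.

Lemma star_spec {L A} {s t : A -> L} {l r : A -> A -> A}
  (Hnd : nondegenerate s t l r) x q : s q = s x ->
  s (star s t l x q) = t x /\ l x (star s t l x q) = q.
Proof.
  intros Hq. unfold star.
  apply (epsilon_spec (inhabits x) (fun z => s z = t x /\ l x z = q)).
  destruct (proj1 Hnd x q Hq) as [y [Hy _]]. eauto.
Qed.

Lemma map_cancel {A} (f g : A -> A) (a : list A) :
  (forall e, In e a -> g (f e) = e) -> map g (map f a) = a.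
Proof.
  intros H. rewrite map_map. rewrite <- (map_id a) at 2. apply map_ext_in. auto.
Qed.

Lemma step_inv {L A} {s t : A -> L} {l r : A -> A -> A} (Hyb : qYB s t l r)
  (Hinv : involutive s t l r) u v : step s t l r u v ->
  forall lam, (is_path s t lam u <-> is_path s t lam v) /\
     (is_path s t lam u -> Permutation (pi l u) (pi l v)).
Proof.
  intros [p q x y Hxy]. induction p as [|a p IH]; intros lam; simpl.
  - pose proof (qyb_src Hyb x y Hxy). pose proof (qyb_mid Hyb x y Hxy).
    pose proof (qyb_tgt Hyb x y Hxy).
    split.
    + rewrite H, H1. split; intros [? [? ?]]; repeat split; congruence.
    + intros [_ [_ Hq]]. destruct (Hinv x y Hxy) as [E1 _]. rewrite E1.
      rewrite !map_map.
      replace (map (fun x0 => l (l x y) (l (r x y) x0)) (pi l q))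
        with (map (fun x0 => l x (l y x0)) (pi l q)).
      * apply perm_swap.
      * apply map_ext_in. intros e He. apply (braid1 Hyb); auto.
        symmetry. eapply (pi_src Hyb); eauto.
  - destruct (IH (t a)) as [H1 H2]. split.
    + rewrite H1. tauto.
    + intros [_ Hp]. apply perm_skip, Permutation_map; auto.
Qed.

Lemma cequiv_inv {L A} {s t : A -> L} {l r : A -> A -> A} (Hyb : qYB s t l r)
  (Hinv : involutive s t l r) u v : cequiv s t l r u v ->
  forall lam, (is_path s t lam u <-> is_path s t lam v) /\
     (is_path s t lam u -> Permutation (pi l u) (pi l v)).
Proof.
  induction 1; intros lam.
  - eapply step_inv; eauto.
  - split; [tauto| auto].
  - destruct (IHclos_refl_sym_trans lam) as [H1 H2]. split; [tauto|].
    intros Hp. symmetry. apply H2. tauto.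
  - destruct (IHclos_refl_sym_trans1 lam) as [H1 H2].
    destruct (IHclos_refl_sym_trans2 lam) as [H3 H4]. split; [tauto|].
    intros Hp. eapply perm_trans; [apply H2; exact Hp|]. apply H4. tauto.
Qed.

Lemma cequiv_cons {L A} {s t : A -> L} {l r : A -> A -> A} y u v :
  cequiv s t l r u v -> cequiv s t l r (y :: u) (y :: v).
Proof.
  induction 1.
  - apply rst_step. destruct H. apply (step_intro s t l r (y :: p) q x y0 H).
  - apply rst_refl.
  - apply rst_sym; auto.
  - eapply rst_trans; eauto.
Qed.

Lemma cequiv_swap {L A} {s t : A -> L} {l r : A -> A -> A} x y q :
  t x = s y -> cequiv s t l r (x :: y :: q) (l x y :: r x y :: q).
Proof. intros H. apply rst_step. apply (step_intro s t l r [] q x y H). Qed.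

Lemma exchange {L A} {s t : A -> L} {l r : A -> A -> A} (Hyb : qYB s t l r) :
  forall u lam e, is_path s t lam u -> In e (pi l u) ->
  exists u', is_path s t (t e) u' /\ cequiv s t l r u (e :: u').
Proof.
  induction u as [|x u IH]; simpl; intros lam e Hp He; [contradiction|].
  destruct Hp as [Hx Hp]. destruct He as [<-|He].
  - exists u. split; auto. apply rst_refl.
  - apply in_map_iff in He as [e' [<- He']].
    destruct (IH _ _ Hp He') as [w [Hw Hc]].
    assert (Hs : s e' = t x) by (eapply (pi_src Hyb); eauto).
    exists (r x e' :: w). split.
    + simpl. split. symmetry; apply (qyb_mid Hyb); auto.
      rewrite (qyb_tgt Hyb); auto.
    + eapply rst_trans. apply cequiv_cons; eauto.
      apply cequiv_swap; auto.
Qed.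

Lemma perm_cancel {L A} {s t : A -> L} {l r : A -> A -> A} (Hyb : qYB s t l r)
  (Hnd : nondegenerate s t l r) y a b extra :
  (forall e, In e a -> s e = t y) -> (forall e, In e b -> s e = t y) ->
  Permutation (map (l y) a) (map (l y) b ++ extra) ->
  Permutation a (b ++ map (star s t l y) extra).
Proof.
  intros Ha Hb H. apply (Permutation_map (star s t l y)) in H.
  rewrite map_app in H. rewrite !map_cancel in H; auto.
  - intros; apply (star_l Hyb Hnd); auto.
  - intros; apply (star_l Hyb Hnd); auto.
Qed.

Lemma pi_inj {L A} {s t : A -> L} {l r : A -> A -> A} (Hyb : qYB s t l r)
  (Hinv : involutive s t l r) (Hnd : nondegenerate s t l r) :
  forall n u v lam, length u = n -> is_path s t lam u -> is_path s t lam v ->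
  Permutation (pi l u) (pi l v) -> cequiv s t l r u v.
Proof.
  induction n as [|n IH]; intros u v lam Hn Hu Hv Hperm.
  - destruct u; [|discriminate]. simpl in Hperm.
    apply Permutation_nil in Hperm. destruct v; [apply rst_refl|discriminate].
  - destruct v as [|y v'].
    { apply Permutation_length in Hperm. rewrite !pi_length in Hperm. simpl in Hperm. lia. }
    assert (Hy : In y (pi l u)).
    { eapply Permutation_in. symmetry; eauto. simpl; auto. }
    destruct (exchange Hyb _ _ _ Hu Hy) as [w [Hw Hc]].
    destruct (cequiv_inv Hyb Hinv _ _ Hc lam) as [P1 P2].
    pose proof (P2 Hu) as Hp2. pose proof (proj1 P1 Hu) as Hyw.
    destruct Hyw as [Hys _]. destruct Hv as [_ Hv'].
    assert (Hpw : Permutation (pi l (y :: w)) (pi l (y :: v'))).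
    { eapply perm_trans; [symmetry; exact Hp2| exact Hperm]. }
    simpl in Hpw. apply Permutation_cons_inv in Hpw.
    assert (Hpw' : Permutation (pi l w) (pi l v')).
    { pose proof (perm_cancel Hyb Hnd y (pi l w) (pi l v') [] ) as X.
      simpl in X. rewrite !app_nil_r in X. apply X.
      - intros e He; exact (pi_src Hyb _ _ Hw e He).
      - intros e He; exact (pi_src Hyb _ _ Hv' e He).
      - auto. }
    eapply rst_trans; [exact Hc|]. apply cequiv_cons.
    apply (IH w v' (t y)); auto.
    apply Permutation_length in Hpw'. rewrite !pi_length in Hpw'.
    apply Permutation_length in Hperm. rewrite !pi_length in Hperm. simpl in Hperm. lia.
Qed.

Lemma path_app {L A} {s t : A -> L} u : forall lam z,
  is_path s t lam (u ++ z) <-> is_path s t lam u /\ is_path s t (tgt s t lam u) z.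
Proof. induction u as [|x u IH]; simpl; intros lam z; [tauto|]. rewrite IH. tauto. Qed.

Lemma tgt_app {L A} {s t : A -> L} u : forall lam z,
  tgt s t lam (u ++ z) = tgt s t (tgt s t lam u) z.
Proof. induction u as [|x u IH]; simpl; auto. Qed.

Lemma ldiv_of_perm {L A} {s t : A -> L} {l r : A -> A -> A} (Hyb : qYB s t l r)
  (Hinv : involutive s t l r) (Hnd : nondegenerate s t l r) :
  forall u lam v extra, is_path s t lam u -> is_path s t lam v ->
  Permutation (pi l v) (pi l u ++ extra) -> ldiv s t l r lam u v.
Proof.
  induction u as [|x u IH]; intros lam v extra Hu Hv Hp.
  - split; [exact I|]. split; auto. exists v. split; auto. apply rst_refl.
  - assert (Hx : In x (pi l v)).
    { eapply Permutation_in. symmetry; eauto. simpl; auto. }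
    destruct (exchange Hyb _ _ _ Hv Hx) as [v2 [Hv2 Hc]].
    destruct (cequiv_inv Hyb Hinv _ _ Hc lam) as [P1 P2].
    pose proof (P2 Hv) as Hp2.
    assert (Hq : Permutation (pi l (x :: v2)) (pi l (x :: u) ++ extra)).
    { eapply perm_trans; [symmetry; exact Hp2| exact Hp]. }
    simpl in Hq. apply Permutation_cons_inv in Hq.
    destruct Hu as [Hxs Hu].
    apply (perm_cancel Hyb Hnd) in Hq.
    2: { intros e He; exact (pi_src Hyb _ _ Hv2 e He). }
    2: { intros e He; exact (pi_src Hyb _ _ Hu e He). }
    destruct (IH _ _ _ Hu Hv2 Hq) as [_ [_ [z [Hz Hcz]]]].
    split; [simpl; auto|]. split; auto. exists z. split; [simpl; auto|].
    eapply rst_trans; [|apply rst_sym; exact Hc]. simpl. apply cequiv_cons. auto.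
Qed.

Lemma perm_of_ldiv {L A} {s t : A -> L} {l r : A -> A -> A} (Hyb : qYB s t l r)
  (Hinv : involutive s t l r) lam u v :
  ldiv s t l r lam u v -> exists extra, Permutation (pi l v) (pi l u ++ extra).
Proof.
  intros [Hu [Hv [z [Hz Hc]]]].
  assert (Hp : is_path s t lam (u ++ z)) by (apply path_app; auto).
  destruct (cequiv_inv Hyb Hinv _ _ Hc lam) as [_ P2].
  exists (map (Lam l u) (pi l z)). rewrite <- pi_app. symmetry. auto.
Qed.

Lemma deltas_snoc {L A} (s t : A -> L) (l : A -> A -> A) :
  forall rest acc y, deltas s t l acc (rest ++ [y]) =
    deltas s t l acc rest ++ [Om s t l (rev (acc ++ rest)) y].
Proof.
  induction rest as [|x rest IH]; intros acc y; simpl.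
  - rewrite app_nil_r. reflexivity.
  - rewrite IH. rewrite <- app_assoc. reflexivity.
Qed.

Lemma Delta_spec {L A} {s t : A -> L} {l r : A -> A -> A} (Hyb : qYB s t l r)
  (Hnd : nondegenerate s t l r) :
  forall I lam, (forall x, In x I -> s x = lam) ->
  is_path s t lam (Delta s t l I) /\ pi l (Delta s t l I) = I /\
  forall x, s x = lam -> s (Om s t l (rev I) x) = tgt s t lam (Delta s t l I) /\
     Lam l (Delta s t l I) (Om s t l (rev I) x) = x.
Proof.
  induction I as [|a y IH] using rev_ind; intros lam HI.
  - simpl. repeat split; auto.
  - unfold Delta in *. rewrite deltas_snoc. simpl.
    destruct (IH lam) as [H1 [H2 H3]].
    { intros x Hx; apply HI, in_or_app; auto. }
    set (D := deltas s t l [] y) in *.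
    set (p := Om s t l (rev y) a).
    assert (Ha : s a = lam) by (apply HI, in_or_app; simpl; auto).
    destruct (H3 a Ha) as [Hps Hpl].
    split; [|split].
    + apply path_app. split; auto. simpl. auto.
    + rewrite pi_app, H2. simpl. unfold p. rewrite Hpl. reflexivity.
    + intros x Hx. rewrite rev_app_distr. simpl.
      destruct (H3 x Hx) as [Hqs Hql].
      destruct (star_spec Hnd p (Om s t l (rev y) x)) as [E1 E2].
      { rewrite Hqs. auto. }
      split.
      * rewrite tgt_app. simpl. exact E1.
      * unfold Lam in *. rewrite fold_right_app. simpl. fold p. rewrite E2. exact Hql.
Qed.

Lemma nodup_incl_perm {A} : forall (a b : list A), NoDup a -> incl a b ->
  exists c, Permutation b (a ++ c).
Proof.
  induction a as [|x a IH]; intros b Ha Hi.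
  - exists b. auto.
  - assert (Hx : In x b) by (apply Hi; simpl; auto).
    apply in_split in Hx as [b1 [b2 ->]].
    inversion Ha; subst.
    destruct (IH (b1 ++ b2)) as [c Hc]; auto.
    + intros e He. assert (In e (b1 ++ x :: b2)) by (apply Hi; simpl; auto).
      apply in_app_or in H. apply in_or_app. destruct H as [H|[H|H]]; auto.
      subst; contradiction.
    + exists c. simpl. eapply perm_trans. symmetry. apply Permutation_middle.
      apply perm_skip. auto.
Qed.

Lemma nodup_cover {A} : forall (l0 : list A), exists U, NoDup U /\ (forall x, In x U <-> In x l0).
Proof.
  induction l0 as [|a l0 IH].
  - exists []. split; [constructor|]. simpl; tauto.
  - destruct IH as [U [HU HI]]. destruct (classic (In a U)).
    + exists U. split; auto. intros x. simpl. rewrite HI. split; [auto|].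
      intros [<-|Hx]; auto. apply HI; auto.
    + exists (a :: U). split; [constructor; auto|]. intros x. simpl. rewrite HI. tauto.
Qed.

Lemma InE_fwd {L A} {s t : A -> L} {l r : A -> A -> A} (Hyb : qYB s t l r)
  (Hinv : involutive s t l r) (Hnd : nondegenerate s t l r) lam w :
  InE s t l r lam w -> is_path s t lam w /\ NoDup (pi l w).
Proof.
  induction 1 as [x|lam F m HF IH Hlcm|lam u v Hu IH Hc].
  - simpl. split; [auto|]. constructor; [simpl; auto|constructor].
  - destruct (nodup_cover (concat (map (pi l) F))) as [U [HU HUi]].
    assert (HUs : forall x, In x U -> s x = lam).
    { intros x Hx. apply HUi in Hx. apply in_concat in Hx as [g [Hg Hx]].
      apply in_map_iff in Hg as [f [<- Hf]].
      destruct (IH f Hf) as [Hp _]. exact (pi_src Hyb _ _ Hp x Hx). }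
    destruct (Delta_spec Hyb Hnd U lam HUs) as [HD1 [HD2 _]].
    destruct Hlcm as [Hm [_ Hmin]].
    split; auto.
    assert (Hd : ldiv s t l r lam m (Delta s t l U)).
    { apply Hmin; auto. intros f Hf. destruct (IH f Hf) as [Hp Hnod].
      destruct (nodup_incl_perm (pi l f) U) as [c Hc]; auto.
      - intros x Hx. apply HUi. apply in_concat. exists (pi l f). split; auto.
        apply in_map; auto.
      - apply (ldiv_of_perm Hyb Hinv Hnd _ _ _ c); auto. rewrite HD2. auto. }
    destruct (perm_of_ldiv Hyb Hinv _ _ _ Hd) as [c Hc]. rewrite HD2 in Hc.
    apply Permutation_NoDup in Hc; auto. eapply NoDup_app_remove_r; eauto.
  - destruct IH as [Hp Hn]. destruct (cequiv_inv Hyb Hinv _ _ Hc lam) as [P1 P2].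
    split; [tauto|]. exact (Permutation_NoDup (P2 Hp) Hn).
Qed.

Lemma InE_nil {L A} (s t : A -> L) (l r : A -> A -> A) lam : InE s t l r lam [].
Proof.
  apply (@InE_lcm _ _ s t l r lam [] []).
  - intros f [].
  - split; [exact I|]. split; [intros f []|].
    intros m' Hm' _. split; [exact I|]. split; auto. exists m'. split; auto.
    apply rst_refl.
Qed.

Lemma InE_Delta {L A} {s t : A -> L} {l r : A -> A -> A} (Hyb : qYB s t l r)
  (Hinv : involutive s t l r) (Hnd : nondegenerate s t l r) lam I :
  NoDup I -> (forall x, In x I -> s x = lam) -> InE s t l r lam (Delta s t l I).
Proof.
  intros HN HI. destruct (Delta_spec Hyb Hnd I lam HI) as [HD1 [HD2 _]].
  apply (@InE_lcm _ _ s t l r lam (map (fun x => [x]) I)).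
  - intros f Hf. apply in_map_iff in Hf as [x [<- Hx]]. rewrite <- (HI x Hx).
    apply InE_gen.
  - split; auto. split.
    + intros f Hf. apply in_map_iff in Hf as [x [<- Hx]].
      apply in_split in Hx as [b1 [b2 Hb]].
      apply (ldiv_of_perm Hyb Hinv Hnd _ _ _ (b1 ++ b2)); auto.
      * simpl. split; auto. apply HI. rewrite Hb. apply in_or_app; simpl; auto.
      * rewrite HD2, Hb. simpl. symmetry. apply Permutation_middle.
    + intros m' Hm' Hdiv.
      assert (Hin : incl I (pi l m')).
      { intros x Hx. assert (Hd : ldiv s t l r lam [x] m') by (apply Hdiv, in_map_iff; eauto).
        destruct (perm_of_ldiv Hyb Hinv _ _ _ Hd) as [c Hc].
        eapply Permutation_in. symmetry; eauto. simpl; auto. }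
      destruct (nodup_incl_perm I (pi l m')) as [c Hc]; auto.
      apply (ldiv_of_perm Hyb Hinv Hnd _ _ _ c); auto. rewrite HD2. auto.
Qed.

Theorem proposition5p10 (L A : Type) (s t : A -> L) (l r : A -> A -> A)
  (Hyb : qYB s t l r) (Hinv : involutive s t l r) (Hnd : nondegenerate s t l r) :
  forall (lam : L) (w : list A),
    InE s t l r lam w <->
    (cequiv s t l r w [] \/
     exists I : list A, I <> [] /\ NoDup I /\ (forall x, In x I -> s x = lam) /\
       cequiv s t l r w (Delta s t l I)).
Proof.
  intros lam w. split.
  - intros H. destruct (InE_fwd Hyb Hinv Hnd lam w H) as [Hp HN].
    destruct w as [|x w'].
    + left. apply rst_refl.
    + right. exists (pi l (x :: w')).
      assert (HI : forall y, In y (pi l (x :: w')) -> s y = lam)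
        by (intros y Hy; exact (pi_src Hyb _ _ Hp y Hy)).
      destruct (Delta_spec Hyb Hnd _ lam HI) as [HD1 [HD2 _]].
      split; [discriminate|]. split; auto. split; auto.
      apply (pi_inj Hyb Hinv Hnd _ _ _ lam eq_refl); auto.
      rewrite HD2. apply Permutation_refl.
  - intros [H|[I [_ [HN [HI Hc]]]]].
    + apply (InE_equiv (InE_nil s t l r lam)). apply rst_sym. exact H.
    + apply (InE_equiv (InE_Delta Hyb Hinv Hnd lam I HN HI)). apply rst_sym. exact Hc.
Qed.
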